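(* For nonnegative integers $s_1,s_2$, let $N(s_1,s_2)$ be the number of $(x_1,x_2,x_3,x_4)\in\mathbb Z_{\ge0}^4$ with $x_1+2x_2+x_3=s_1$ and $x_1+x_2+x_4=s_2$ (the vector partition function of $\begin{pmatrix}1&2&1&0\\1&1&0&1\end{pmatrix}$). For $\boldsymbol\alpha=(\alpha_1,\alpha_2)\in\mathbb C^2$ with $(\alpha_1+\alpha_2)(2\alpha_1+\alpha_2)\ne0$ define $$W(\mathbf s;\boldsymbol\alpha)=\frac{\alpha_1^2\,A+2\alpha_1\alpha_2\,B+\alpha_2^2\,C}{2(\alpha_1+\alpha_2)(2\alpha_1+\alpha_2)},$$ where $A=s_1^2+4s_1+\tfrac72+\tfrac12(-1)^{s_1}$, $B=s_1s_2+\tfrac32s_1+2s_2+\tfrac{11}4+\tfrac14(-1)^{s_1}$, $C=s_2^2+3s_2+2$. Then: (i) if $s_1\le s_2$, $N(s_1,s_2)=W(\mathbf s;(1,0))=\frac{s_1^2}{4}+s_1+\frac{7+(-1)^{s_1}}{8}$; (ii) if $s_1/2-1\le s_2\le s_1+1$, $N(s_1,s_2)=\operatorname{Re}W(\mathbf s;(1,-1\pm i))=s_1s_2-\frac{s_1^2+2s_2^2}{4}+\frac{s_1+s_2}{2}+\frac{7+(-1)^{s_1}}{8}$; (iii) if $s_2\le s_1/2$, $N(s_1,s_2)=W(\mathbf s;(0,1))=\frac{s_2^2}{2}+\frac{3s_2}{2}+1$. *)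

(* Defs.v *)
From HB Require Import structures.
From mathcomp Require Import all_boot all_order all_algebra all_field.
Set Implicit Arguments. Unset Strict Implicit. Unset Printing Implicit Defensive.
Import Order.TTheory GRing.Theory Num.Theory.
Local Open Scope ring_scope.

(* The ranges x1,x2,x3 <= s1 and x4 <= s2 are forced by the first/second
   equation, so the finite sum counts exactly all solutions. *)
Definition Npart (s1 s2 : nat) : nat :=
  (\sum_(x1 < s1.+1) \sum_(x2 < s1.+1) \sum_(x3 < s1.+1) \sum_(x4 < s2.+1)
     ((x1 + 2 * x2 + x3 == s1) && (x1 + x2 + x4 == s2) : nat))%N.

Definition WA (s1 : nat) : algC :=
  s1%:R ^+ 2 + 4 * s1%:R + 7 / 2 + (1 / 2) * (-1) ^+ s1.
Definition WB (s1 s2 : nat) : algC :=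
  s1%:R * s2%:R + (3 / 2) * s1%:R + 2 * s2%:R + 11 / 4 + (1 / 4) * (-1) ^+ s1.
Definition WC (s2 : nat) : algC := s2%:R ^+ 2 + 3 * s2%:R + 2.

(* W(s; alpha); meaningful when (a1 + a2)(2 a1 + a2) != 0. *)
Definition W (s1 s2 : nat) (a1 a2 : algC) : algC :=
  (a1 ^+ 2 * WA s1 + 2 * a1 * a2 * WB s1 s2 + a2 ^+ 2 * WC s2)
  / (2 * (a1 + a2) * (2 * a1 + a2)).

(* Main.v *)
Require Import Defs.
From HB Require Import structures.
From mathcomp Require Import all_boot all_order all_algebra all_field.
From mathcomp Require Import zify ring.
Import Order.TTheory GRing.Theory Num.Theory.

Lemma sum_widen (F : nat -> nat) n m : n <= m -> (forall i, n <= i -> F i = 0) ->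
  \sum_(i < m) F i = \sum_(i < n) F i.
Proof.
move=> le hF; elim: m le => [|m IH].
  by rewrite leqn0 => /eqP ->.
rewrite leq_eqVlt => /orP [/eqP -> // | lt].
by rewrite big_ord_recr /= hF // addn0 IH.
Qed.

Lemma sum_le c b : c < b -> \sum_(i < b) (i <= c : nat) = c.+1.
Proof.
move=> cb; rewrite (@sum_widen (fun i => (i <= c : nat)) c.+1 b) //.
  rewrite (eq_bigr (fun=> 1)) ?big_const_ord ?iter_addn_0 ?mul1n // => i _.
  by rewrite -ltnS ltn_ord.
by move=> i hi; rewrite leqNgt hi.
Qed.

Lemma sum_eq m n : \sum_(x < n.+1) ((m + x == n) : nat) = (m <= n).
Proof.
case: (leqP m n) => h.
  have hk : n - m < n.+1 by lia.
  rewrite (bigD1 (Ordinal hk)) //= big1.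
    have -> : m + (n - m) == n by apply/eqP; lia.
    by [].
  move=> x hx; have -> : (m + x == n) = false; last by [].
  apply/negbTE/negP => /eqP e; move/negP: hx; apply; apply/eqP/val_inj => /=; lia.
rewrite big1 // => x _; have -> : (m + x == n) = false; last by [].
by apply/negbTE/negP => /eqP e; lia.
Qed.

Definition G b1 b2 s1 s2 := \sum_(x1 < b1) \sum_(x2 < b2)
  ((x1 + 2 * x2 <= s1) && (x1 + x2 <= s2) : nat).
Definition cnt s1 s2 := G s1.+1 s1.+1 s1 s2.

Lemma Npart_cnt s1 s2 : Npart s1 s2 = cnt s1 s2.
Proof.
rewrite /Npart /cnt /G; apply: eq_bigr => x1 _; apply: eq_bigr => x2 _.
under eq_bigr do under eq_bigr do rewrite -mulnb.
under eq_bigr do rewrite -big_distrr /=.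
rewrite -big_distrl /= -mulnb.
rewrite (@sum_eq (x1 + 2 * x2) s1) (@sum_eq (x1 + x2) s2) //.
Qed.

Lemma G_widen b1 b2 s1 s2 : s1 < b1 -> s1 < b2 -> G b1 b2 s1 s2 = cnt s1 s2.
Proof.
move=> h1 h2; rewrite /cnt /G.
rewrite (eq_bigr (fun x1 : 'I_b1 => \sum_(x2 < s1.+1)
   ((x1 + 2 * x2 <= s1) && (x1 + x2 <= s2) : nat))); last first.
  move=> x1 _; apply: (@sum_widen (fun x2 => ((x1 + 2 * x2 <= s1) && (x1 + x2 <= s2) : nat)) s1.+1 b2) => // i hi.
  have -> : (x1 + 2 * i <= s1) = false by apply/negbTE; lia.
  by [].
apply: (@sum_widen (fun x1 => \sum_(x2 < s1.+1)
   ((x1 + 2 * x2 <= s1) && (x1 + x2 <= s2) : nat)) s1.+1 b1) => // i hi.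
apply: big1 => x2 _.
have -> : (i + 2 * x2 <= s1) = false by apply/negbTE; lia.
by [].
Qed.

Lemma cnt_rec s1 s2 : cnt s1.+2 s2.+1 = cnt s1 s2 + (minn s1.+2 s2.+1).+1.
Proof.
have h3 : s1 < s1.+3 by lia.
have h2 : s1 < s1.+2 by lia.
rewrite -(@G_widen s1.+3 s1.+2 s1 s2 h3 h2) /cnt /G.
under eq_bigr do rewrite big_ord_recl.
rewrite big_split /= addnC; congr (_ + _).
  apply: eq_bigr => x1 _; apply: eq_bigr => x2 _ /=.
  congr (nat_of_bool _); apply/idP/idP; rewrite /bump /=; lia.
rewrite -(@sum_le (minn s1.+2 s2.+1) s1.+3); last by lia.
apply: eq_bigr => x1 _ /=; congr (nat_of_bool _); apply/idP/idP; lia.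
Qed.

Lemma cnt0 s2 : cnt 0 s2 = 1.
Proof. by rewrite /cnt /G !big_ord1. Qed.

Lemma cnt1 s2 : cnt 1 s2.+1 = 2.
Proof. by rewrite /cnt /G !big_ord_recl !big_ord0. Qed.

Lemma cnt_0 s1 : cnt s1 0 = 1.
Proof.
rewrite /cnt /G.
rewrite (eq_bigr (fun x1 : 'I_s1.+1 => \sum_(x2 < 1)
   ((x1 + 2 * x2 <= s1) && (x1 + x2 <= 0) : nat))); last first.
  move=> x1 _; apply: (@sum_widen (fun x2 => ((x1 + 2 * x2 <= s1) && (x1 + x2 <= 0) : nat)) 1 s1.+1) => // i hi.
  have -> : (x1 + i <= 0) = false by apply/negbTE; lia.
  by rewrite andbF.
rewrite (@sum_widen (fun x1 => \sum_(x2 < 1)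
   ((x1 + 2 * x2 <= s1) && (x1 + x2 <= 0) : nat)) 1 s1.+1) //.
  by rewrite !big_ord1.
move=> i hi; rewrite big_ord1 /=.
have -> : (i + 0 <= 0) = false by apply/negbTE; lia.
by rewrite andbF.
Qed.

Local Open Scope ring_scope.

Lemma cnt_i s1 s2 : (s1 <= s2)%N ->
  (cnt s1 s2)%:R = s1%:R ^+ 2 / 4 + s1%:R + (7 + (-1) ^+ s1) / 8 :> algC.
Proof.
move: s2; elim/ltn_ind: s1 => -[|[|s1]] IH s2 h.
{ rewrite cnt0 expr0; by field. }
{ case: s2 h => // s2 _; rewrite cnt1 expr1; by field. }
case: s2 h => // s2 h.
rewrite cnt_rec natrD (IH s1) //; last by lia.
rewrite (minn_idPl _); last by lia.
rewrite !exprS; by field.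
Qed.

Lemma cnt_iii s1 s2 : (2 * s2 <= s1)%N ->
  (cnt s1 s2)%:R = s2%:R ^+ 2 / 2 + 3 * s2%:R / 2 + 1 :> algC.
Proof.
elim: s2 s1 => [|s2 IH] s1 h.
  by rewrite cnt_0; field.
case: s1 h => [|[|s1]] h; try lia.
rewrite cnt_rec natrD (IH s1); last by lia.
rewrite (minn_idPr _); last by lia.
by field.
Qed.

Lemma cnt_ii s1 s2 : (s1 <= 2 * s2 + 2)%N -> (s2 <= s1.+1)%N ->
  (cnt s1 s2)%:R = s1%:R * s2%:R - (s1%:R ^+ 2 + 2 * s2%:R ^+ 2) / 4
       + (s1%:R + s2%:R) / 2 + (7 + (-1) ^+ s1) / 8 :> algC.
Proof.
elim: s2 s1 => [|s2 IH] s1 h1 h2.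
  rewrite cnt_0.
  case: s1 h1 h2 => [|[|[|s1]]] h1 h2; try lia.
  - rewrite expr0; by field.
  - rewrite expr1; by field.
  - rewrite !exprS expr0; by field.
case: (eqVneq s2.+1 s1.+1) => [[e]|ne].
  rewrite -e cnt_i //; by field.
case: s1 h1 h2 ne => [|[|s1]] h1 h2 ne; try lia.
  have -> : s2 = 0%N by lia.
  rewrite cnt1 expr1; by field.
rewrite cnt_rec natrD (IH s1); [|lia|lia].
rewrite (minn_idPr _); last by lia.
rewrite !exprS; by field.
Qed.

Lemma W10 s1 s2 : W s1 s2 1 0 = s1%:R ^+ 2 / 4 + s1%:R + (7 + (-1) ^+ s1) / 8.
Proof. rewrite /W /WA /WB /WC; by field. Qed.

Lemma W01 s1 s2 : W s1 s2 0 1 = s2%:R ^+ 2 / 2 + 3 * s2%:R / 2 + 1.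
Proof. rewrite /W /WA /WB /WC; by field. Qed.

Definition WX s1 s2 : algC := - WA s1 / 4 + WB s1 s2 - WC s2 / 2.
Definition WY s1 s2 : algC := - WA s1 / 4 + WC s2 / 2.

Lemma WX_real s1 s2 : WX s1 s2 \is Num.real.
Proof.
by rewrite /WX /WA /WB /WC !(rpredD, rpredM, rpredN, rpredV, rpredX, realn, rpred1).
Qed.

Lemma WY_real s1 s2 : WY s1 s2 \is Num.real.
Proof.
by rewrite /WY /WA /WB /WC !(rpredD, rpredM, rpredN, rpredV, rpredX, realn, rpred1).
Qed.

Lemma aux (A B C j : algC) : (- A / 4 + B - C / 2 + j * (- A / 4 + C / 2)) * (2 * j - 2)
   = (A - 2 * B) + j * (2 * B - 2 * C) + 2 * (- A / 4 + C / 2) * (j ^+ 2 + 1).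
Proof. by field. Qed.

Lemma W_rect (j : algC) s1 s2 : j ^+ 2 = -1 ->
  W s1 s2 1 (-1 + j) = WX s1 s2 + j * WY s1 s2.
Proof.
move=> hj.
have e1 : (-1 + j) ^+ 2 = -2 * j.
  have -> : (-1 + j) ^+ 2 = -2 * j + (j ^+ 2 + 1) by ring.
  by rewrite hj addNr addr0.
have ed : 2 * (1 + (-1 + j)) * (2 * 1 + (-1 + j)) = 2 * j - 2.
  have -> : 2 * (1 + (-1 + j)) * (2 * 1 + (-1 + j)) = 2 * j - 2 + 2 * (j ^+ 2 + 1) by ring.
  by rewrite hj addNr mulr0 addr0.
have dnz : 2 * j - 2 != 0.
  apply/eqP => h.
  have jeq : j = 1.
    have -> : j = (2 * j - 2) / 2 + 1 by field.
    by rewrite h mul0r add0r.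
  move: hj; rewrite jeq expr1n => /eqP; rewrite -addr_eq0.
  by rewrite (_ : 1 + 1 = 2%:R) // pnatr_eq0.
rewrite /W e1 ed /WX /WY.
apply: (mulIf dnz); rewrite mulfVK //.
rewrite aux hj addNr mulr0 addr0; ring.
Qed.

Lemma WX_val s1 s2 : WX s1 s2 = s1%:R * s2%:R - (s1%:R ^+ 2 + 2 * s2%:R ^+ 2) / 4
       + (s1%:R + s2%:R) / 2 + (7 + (-1) ^+ s1) / 8.
Proof. rewrite /WX /WA /WB /WC; by field. Qed.

Theorem mainTheorem6 (s1 s2 : nat) :
  ((s1 <= s2)%N ->
     (Npart s1 s2)%:R = W s1 s2 1 0 /\
     W s1 s2 1 0 = s1%:R ^+ 2 / 4 + s1%:R + (7 + (-1) ^+ s1) / 8)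
  /\
  (s1%:R / 2 - 1 <= s2%:R :> algC -> (s2 <= s1.+1)%N ->
     (Npart s1 s2)%:R = 'Re (W s1 s2 1 (-1 + 'i)) /\
     (Npart s1 s2)%:R = 'Re (W s1 s2 1 (-1 - 'i)) /\
     'Re (W s1 s2 1 (-1 + 'i)) =
       s1%:R * s2%:R - (s1%:R ^+ 2 + 2 * s2%:R ^+ 2) / 4
       + (s1%:R + s2%:R) / 2 + (7 + (-1) ^+ s1) / 8)
  /\
  (s2%:R <= s1%:R / 2 :> algC ->
     (Npart s1 s2)%:R = W s1 s2 0 1 /\
     W s1 s2 0 1 = s2%:R ^+ 2 / 2 + 3 * s2%:R / 2 + 1).
Proof.
split; [|split].
- move=> h; split; last exact: W10.
  by rewrite Npart_cnt cnt_i // W10.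
- move=> h1 h2.
  have h1' : (s1 <= 2 * s2 + 2)%N.
    rewrite -(ler_nat algC); move: h1; rewrite lerBlDr ler_pdivrMr ?ltr0n //.
    suff -> : (s2%:R + 1) * 2 = ((2 * s2 + 2)%N%:R : algC) by [].
    rewrite natrD natrM; ring.
  have ReP : 'Re (W s1 s2 1 (-1 + 'i)) = WX s1 s2.
    by rewrite (@W_rect _ s1 s2 (sqrCi _)) Re_rect // ?WX_real ?WY_real.
  have ReM : 'Re (W s1 s2 1 (-1 - 'i)) = WX s1 s2.
    have hj : (- 'i : algC) ^+ 2 = -1 by rewrite sqrrN sqrCi.
    rewrite (@W_rect _ s1 s2 hj) mulNr -mulrN Re_rect // ?WX_real //.
    by rewrite rpredN WY_real.
  by rewrite ReP ReM WX_val Npart_cnt cnt_ii.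
- move=> h; split; last exact: W01.
  rewrite Npart_cnt cnt_iii ?W01 //.
  rewrite -(ler_nat algC) natrM; move: h; rewrite ler_pdivlMr ?ltr0n // mulrC.
by [].
Qed.
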